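(* Let $s\in I(\Phi)$. If $C$ is an S-chamber for $s$, then $\mathcal B^s_\bullet(C)=\mathcal B(C)\cap\Phi^s_\bullet$ is a basis of simple roots of the root system $\Phi^s_\bullet$. Moreover, for every Weyl chamber $C'$ of the root system $\Phi^s_\bullet$ there is an S-chamber $C$ for $s$ with $\mathcal B(C)\cap\Phi^s_\bullet=\mathcal B(C')$.
   Context: $\Phi$ is a reduced crystallographic root system spanning a real Euclidean space $V$; $I(\Phi)$ is the set of orthogonal involutions of $V$ preserving $\Phi$. For $s\in I(\Phi)$: $\Phi^s_\bullet=\{\alpha:s\alpha=-\alpha\}$ (a root subsystem), $\Phi^s_\circ=\{\alpha:s\alpha=\alpha\}$, $\Phi^s_\star=\Phi\setminus(\Phi^s_\circ\cup\Phi^s_\bullet)$. For a Weyl chamber $C$ of $\Phi$ (connected component of the complement of the root hyperplanes), $\Phi^+(C)$ is its set of positive roots and $\mathcal B(C)$ its simple roots. $C$ is an S-chamber for $s$ if $s(\Phi^+(C)\cap\Phi^s_\star)\subseteq\Phi^+(C)$. *)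

(* Defs.v *)
From HB Require Import structures.
From mathcomp Require Import all_boot all_order all_algebra.
From mathcomp Require Import all_classical all_reals all_analysis.
Set Implicit Arguments. Unset Strict Implicit. Unset Printing Implicit Defensive.
Import Order.TTheory GRing.Theory Num.Theory.
Import numFieldNormedType.Exports.
Local Open Scope classical_set_scope.
Local Open Scope ring_scope.

Definition dotv (R : realType) (n : nat) (x y : 'rV[R]_n) : R := (x *m y^T) 0 0.

(* Reduced crystallographic root system spanning V. *)
Definition root_system (R : realType) (n : nat) (Phi : seq 'rV[R]_n) : Prop :=
  [/\ 0 \notin Phi,
      row_full (\matrix_(i < size Phi) nth 0 Phi i),
      (forall a b, a \in Phi -> b \in Phi ->
         b - (2 * dotv b a / dotv a a) *: a \in Phi),
      (forall a b, a \in Phi -> b \in Phi ->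
         (2 * dotv b a / dotv a a) \is a Num.int) &
      (forall a (c : R), a \in Phi -> c *: a \in Phi -> c = 1 \/ c = -1)].

(* I(Phi): orthogonal involutions of V preserving Phi (acting by x |-> x *m s). *)
Definition orth_invol (R : realType) (n : nat) (Phi : seq 'rV[R]_n) (s : 'M[R]_n) : Prop :=
  [/\ s *m s^T = 1%:M, s *m s = 1%:M & forall a, a \in Phi -> a *m s \in Phi].

Definition bullet (R : realType) (n : nat) (Phi : seq 'rV[R]_n) (s : 'M[R]_n) :=
  [seq a <- Phi | a *m s == - a].
Definition circ (R : realType) (n : nat) (Phi : seq 'rV[R]_n) (s : 'M[R]_n) :=
  [seq a <- Phi | a *m s == a].
Definition star (R : realType) (n : nat) (Phi : seq 'rV[R]_n) (s : 'M[R]_n) :=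
  [seq a <- Phi | (a *m s != a) && (a *m s != - a)].

Definition regular_set (R : realType) (n : nat) (Psi : seq 'rV[R]_n) : set 'rV[R]_n :=
  [set x | forall a, a \in Psi -> dotv x a != 0].

Definition weyl_chamber (R : realType) (n : nat) (Psi : seq 'rV[R]_n)
    (C : set 'rV[R]_n) : Prop :=
  exists2 x, regular_set Psi x & C = connected_component (regular_set Psi) x.

Definition pos_roots (R : realType) (n : nat) (Psi : seq 'rV[R]_n)
    (C : set 'rV[R]_n) : set 'rV[R]_n :=
  [set a | a \in Psi /\ forall x, C x -> 0 < dotv a x].

Definition simple_roots (R : realType) (n : nat) (Psi : seq 'rV[R]_n)
    (C : set 'rV[R]_n) : set 'rV[R]_n :=
  [set a | pos_roots Psi C a /\
           ~ (exists b c, [/\ pos_roots Psi C b, pos_roots Psi C c & a = b + c])].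

Definition S_chamber (R : realType) (n : nat) (Phi : seq 'rV[R]_n) (s : 'M[R]_n)
    (C : set 'rV[R]_n) : Prop :=
  weyl_chamber Phi C /\
  forall a, pos_roots Phi C a -> a \in star Phi s -> pos_roots Phi C (a *m s).

Definition simple_basis (R : realType) (n : nat) (Psi : seq 'rV[R]_n)
    (B : set 'rV[R]_n) : Prop :=
  exists2 C', weyl_chamber Psi C' & B = simple_roots Psi C'.

(* Main.v *)
Require Import Defs.
From HB Require Import structures.
From mathcomp Require Import all_boot all_order all_algebra.
From mathcomp Require Import all_classical all_reals all_analysis.
From mathcomp Require Import ring lra.
Import Order.TTheory GRing.Theory Num.Theory.
Import numFieldNormedType.Exports.
Local Open Scope classical_set_scope.
Local Open Scope ring_scope.

Set Implicit Arguments. Unset Strict Implicit. Unset Printing Implicit Defensive.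


Section Dot.
Variables (R : realType) (n : nat).
Implicit Types (a b x y : 'rV[R]_n).

Lemma dotvE a x : dotv a x = \sum_(j < n) a 0 j * x 0 j.
Proof. by rewrite /dotv mxE; apply: eq_bigr => j _; rewrite mxE. Qed.

Lemma dotvC a x : dotv a x = dotv x a.
Proof. by rewrite !dotvE; apply: eq_bigr => j _; rewrite mulrC. Qed.

Lemma dotvDl a b x : dotv (a + b) x = dotv a x + dotv b x.
Proof. by rewrite /dotv mulmxDl mxE. Qed.

Lemma dotvNl a x : dotv (- a) x = - dotv a x.
Proof. by rewrite /dotv mulNmx mxE. Qed.

Lemma dotvZl c a x : dotv (c *: a) x = c * dotv a x.
Proof. by rewrite /dotv -scalemxAl mxE. Qed.

Lemma dotvDr a x y : dotv a (x + y) = dotv a x + dotv a y.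
Proof. by rewrite dotvC dotvDl !(dotvC _ a). Qed.

Lemma dotvZr c a x : dotv a (c *: x) = c * dotv a x.
Proof. by rewrite dotvC dotvZl dotvC. Qed.

Lemma dotv0l x : dotv 0 x = 0.
Proof. by rewrite /dotv mul0mx mxE. Qed.

Lemma dotv_s (s : 'M[R]_n) a x : s^T = s -> dotv (a *m s) x = dotv a (x *m s).
Proof. by move=> sT; rewrite /dotv trmx_mul sT mulmxA. Qed.

Lemma dotv_gt0 a : a != 0 -> 0 < dotv a a.
Proof.
move=> a0; rewrite dotvE; have [j aj] : exists j, a 0 j != 0.
  apply/existsP; apply: contraNT a0 => /existsPn H; apply/eqP/rowP => j.
  by rewrite mxE; apply/eqP; move: (H j); rewrite negbK.
rewrite (bigD1 j) //= ltr_pwDl //; last by apply: sumr_ge0 => i _; rewrite -expr2 sqr_ge0.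
by rewrite -expr2 exprn_even_gt0 //=.
Qed.

Lemma dotv_cont a : continuous (fun x : 'rV[R]_n => dotv a x).
Proof.
have -> : (fun x : 'rV[R]_n => dotv a x) = fun x => \sum_(j <- index_enum 'I_n) a 0 j * x 0 j.
  by apply: funext => x; rewrite dotvE.
elim: (index_enum _) => [|j r IH].
  by under eq_fun do rewrite big_nil; apply: cst_continuous.
under eq_fun do rewrite big_cons.
move=> x; apply: (@continuousD _ _ _ (fun x : 'rV[R]_n => a 0 j * x 0 j) (fun x => \sum_(j <- r) a 0 j * x 0 j)); last exact: IH.
apply: (@continuousM _ _ (fun _ => a 0 j) (fun x : 'rV[R]_n => x 0 j)); first exact: cst_continuous.
exact: coord_continuous.
Qed.
End Dot.


Section Topo.
Variables (R : realType) (n : nat).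

Lemma comp_sign (Psi : seq 'rV[R]_n) a x z : a \in Psi ->
  connected_component (regular_set Psi) x z ->
  (0 < dotv a z) = (0 < dotv a x).
Proof.
move=> aP xz.
set B := connected_component (regular_set Psi) x.
have Bx : B x.
  by apply: connected_component_refl; move: xz => /connected_component_sym /connected_component_sub.
have nz : forall w, B w -> dotv a w != 0.
  by move=> w /connected_component_sub Hw; rewrite dotvC; apply: Hw.
have cI : is_interval ((fun w => dotv a w) @` B).
  apply/connected_intervalP; apply: connected_continuous_connected.
    exact: component_connected.
  apply: continuous_subspaceT => w; exact: dotv_cont.
have key : forall u v, B u -> B v -> dotv a u < 0 -> 0 < dotv a v -> False.
  move=> u v Bu Bv u0 v0.
  have [w Bw w0] : ((fun w => dotv a w) @` B) 0.
    by apply: (cI _ _ (imageP _ Bu) (imageP _ Bv)); rewrite !ltW.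
  by move: (nz w Bw); rewrite w0 eqxx.
have := nz z xz; have := nz x Bx.
rewrite !neq_lt => /orP[]x0 /orP[]z0.
- by rewrite ltNge (ltW z0) ltNge (ltW x0).
- by case: (key x z Bx xz x0 z0).
- by case: (key z x xz Bx z0 x0).
- by rewrite x0 z0.
Qed.

Lemma pos_roots_comp (Psi : seq 'rV[R]_n) x a : regular_set Psi x ->
  pos_roots Psi (connected_component (regular_set Psi) x) a <->
  a \in Psi /\ 0 < dotv a x.
Proof.
move=> rx; split.
  move=> [aP H]; split => //; apply: H; exact: connected_component_refl.
move=> [aP ax]; split => // z xz; by rewrite (comp_sign aP xz).
Qed.

Lemma segment_comp (A : set 'rV[R]_n) y d :
  (forall t : R, 0 <= t <= 1 -> A (y + t *: d)) ->
  connected_component A y (y + d).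
Proof.
move=> H.
exists ((fun t : R => y + t *: d) @` [set` `[0:R, 1]]); last first.
  by exists 1; [rewrite /= in_itv /= lexx ler01 | rewrite scale1r].
split.
- by exists 0; [rewrite /= in_itv /= lexx ler01 | rewrite scale0r addr0].
- by move=> _ [t t01 <-]; apply: H; move: t01; rewrite /= in_itv.
- apply: connected_continuous_connected; first exact: segment_connected.
  apply: continuous_subspaceT => t.
  apply: (@continuousD _ _ _ (fun _ => y) (fun t : R => t *: d)).
    exact: cst_continuous.
  exact: continuousZr_tmp.
Qed.
End Topo.


Section Gen.
Variables (R : realType) (n : nat).

Lemma big_t (T : eqType) (l : seq T) (f p : T -> R) :
  exists2 t : R, 1 <= t & forall a, a \in l -> f a != 0 -> p a < t * `|f a|.
Proof.
elim: l => [|b l [t t1 IH]]; first by exists 1.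
exists (t + `|p b| / `|f b|).
  by rewrite (le_trans t1) // lerDl divr_ge0.
move=> a; rewrite inE => /orP[/eqP-> fb|al fa].
  rewrite mulrDl divfK ?normr_eq0 //.
  apply: (le_lt_trans (ler_norm _)); rewrite ltrDr.
  by rewrite (lt_le_trans _ (ler_wpM2r (normr_ge0 _) t1)) // mul1r normr_gt0.
apply: (lt_le_trans (IH a al fa)); rewrite ler_wpM2r //.
by rewrite lerDl divr_ge0.
Qed.

Lemma generic (l : seq 'rV[R]_n) : (forall u, u \in l -> u != 0) ->
  exists v, forall u, u \in l -> dotv u v != 0.
Proof.
elim: l => [|u l IH] H; first by exists 0.
have [v Hv] := IH (fun w wl => H w (@mem_behead _ (u :: l) w wl)).
have [uv|uv0] := boolP (dotv u v != 0).
  by exists v => w; rewrite inE => /orP[/eqP->|/Hv].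
move/negPn/eqP: uv0 => uv0.
have [T T1 HT] := big_t l (fun w => dotv w v) (fun w => `|dotv w u|).
exists (u + T *: v) => w; rewrite inE => /orP[/eqP->|wl].
  rewrite dotvDr dotvZr uv0 mulr0 addr0; apply: lt0r_neq0.
  by apply: dotv_gt0; apply: H; rewrite mem_head.
rewrite dotvDr dotvZr -normr_eq0; apply: lt0r_neq0.
have T0 : 0 <= T by apply: le_trans T1.
have := HT w wl (Hv w wl); rewrite -{1}(ger0_norm T0) -normrM => h.
have := lerB_dist (T * dotv w v) (- dotv w u); rewrite opprK normrN addrC => h2.
rewrite addrC; apply: (lt_le_trans _ h2); by rewrite addrC subr_gt0.
Qed.
End Gen.


Section P1.
Variables (R : realType) (n : nat).

Lemma part1 (Phi : seq 'rV[R]_n) (s : 'M[R]_n) x : regular_set Phi x ->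
  (forall a, a \in star Phi s -> 0 < dotv a x -> 0 < dotv (a *m s) x) ->
  simple_roots Phi (connected_component (regular_set Phi) x)
    `&` [set a | a \in bullet Phi s]
  = simple_roots (bullet Phi s)
      (connected_component (regular_set (bullet Phi s)) x).
Proof.
move=> rx Hst.
have rbx : regular_set (bullet Phi s) x.
  by move=> a; rewrite mem_filter => /andP[_ aP]; apply: rx.
have inPhi : forall a, a \in bullet Phi s -> a \in Phi.
  by move=> a; rewrite mem_filter => /andP[].
have alt : forall c, c \in Phi -> 0 < dotv c x ->
    c \in bullet Phi s \/ 0 < dotv (c *m s) x.
  move=> c cP c0; have [cb|cb] := eqVneq (c *m s) (- c).
    by left; rewrite mem_filter cb eqxx.
  have [cc|cc] := eqVneq (c *m s) c; first by right; rewrite cc.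
  by right; apply: Hst => //; rewrite mem_filter cP cc cb.
apply/seteqP; split => a /=.
  move=> [[/(pos_roots_comp _ rx) [aP a0] nd] ab]; split.
    by apply/(pos_roots_comp _ rbx).
  move=> [b [c [/(pos_roots_comp _ rbx) [bb b0] /(pos_roots_comp _ rbx) [cb c0] abc]]].
  apply: nd; exists b, c; split => //; apply/(pos_roots_comp _ rx); split => //;
  exact: inPhi.
move=> [/(pos_roots_comp _ rbx) [ab a0] nd]; split => //; split.
  by apply/(pos_roots_comp _ rx); split => //; exact: inPhi.
move=> [b [c [/(pos_roots_comp _ rx) [bP b0] /(pos_roots_comp _ rx) [cP c0] abc]]].
have asN : a *m s = - a by move: ab; rewrite mem_filter => /andP[/eqP].
have diffb : forall b c, b \in bullet Phi s -> c \in Phi -> a = b + c ->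
    c \in bullet Phi s.
  move=> b' c' bb cP' e; have ce : c' = a - b' by rewrite e addrC addKr.
  have bs : b' *m s = - b' by move: bb; rewrite mem_filter => /andP[/eqP].
  rewrite mem_filter cP' andbT {1}ce mulmxBl asN bs opprK ce opprB.
  by rewrite addrC.
case: (alt b bP b0) => [bb|bs0].
  have cb := diffb b c bb cP abc.
  apply: nd; exists b, c; split => //; apply/(pos_roots_comp _ rbx) => //.
case: (alt c cP c0) => [cb|cs0].
  have bb := diffb c b cb bP (etrans abc (addrC _ _)).
  apply: nd; exists b, c; split => //; apply/(pos_roots_comp _ rbx) => //.
have : dotv (a *m s) x > 0 by rewrite abc mulmxDl dotvDl addr_gt0.
by rewrite asN dotvNl oppr_gt0 ltNge (ltW a0).
Qed.
End P1.


Lemma sgn_lem (R : realType) (p c t : R) : `|p| < t * `|c| ->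
  (0 < p + t * c) = (0 < c) /\ p + t * c != 0.
Proof.
move=> h; have h1 := ler_norm p; have h2 := ler_norm (- p); rewrite normrN in h2.
have [c0|c0|c0] := ltgtP c 0.
- rewrite (ltr0_norm c0) mulrN in h.
  have : p + t * c < 0 by nra.
  by move=> H; split; [rewrite !ltNge (ltW H) | rewrite lt_eqF].
- rewrite (gtr0_norm c0) in h; have : 0 < p + t * c by nra.
  by move=> H; split; [apply/idP/idP | rewrite gt_eqF].
- by move: h; rewrite c0 normr0 mulr0 ltNge normr_ge0.
Qed.

Unset Implicit Arguments.

Theorem proposition2p32 (R : realType) (n : nat) (Phi : seq 'rV[R]_n) (s : 'M[R]_n) :
  root_system Phi -> orth_invol Phi s ->
  (forall C, S_chamber Phi s C ->
     simple_basis (bullet Phi s)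
       (simple_roots Phi C `&` [set a | a \in bullet Phi s])) /\
  (forall C', weyl_chamber (bullet Phi s) C' ->
     exists2 C, S_chamber Phi s C &
       simple_roots Phi C `&` [set a | a \in bullet Phi s]
       = simple_roots (bullet Phi s) C').
Proof.
move=> _ [sst ss sPhi].
have sT : s^T = s by rewrite -[s^T]mul1mx -ss -mulmxA sst mulmx1.
have starP : forall a, a \in star Phi s -> a \in Phi.
  by move=> a; rewrite mem_filter => /andP[].
split.
  move=> C [[x rx ->] Hs].
  exists (connected_component (regular_set (bullet Phi s)) x).
    exists x => //; by move=> a; rewrite mem_filter => /andP[_ aP]; apply: rx.
  apply: part1 => // a ast a0.
  have /(Hs a) : pos_roots Phi (connected_component (regular_set Phi) x) a.
    by apply/(pos_roots_comp _ rx); split => //; exact: starP.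
  by move=> /(_ ast) /(pos_roots_comp _ rx) [].
move=> C' [y ry ->].
pose l := [seq a + a *m s | a <- Phi & a *m s != - a].
have Hl : forall u, u \in l -> u != 0.
  move=> u /mapP [a]; rewrite mem_filter => /andP[an _] ->.
  by apply: contra an; rewrite addrC addr_eq0.
have [v Hv] := generic Hl.
pose w := v + v *m s.
have wS : w *m s = w by rewrite /w mulmxDl -mulmxA ss mulmx1 addrC.
have dw : forall a, a \in Phi -> a *m s != - a -> dotv a w != 0.
  move=> a aP an; rewrite /w dotvDr -(dotv_s _ _ sT) -dotvDl.
  by apply: Hv; apply/mapP; exists a => //; rewrite mem_filter an.
have dw0 : forall a, a *m s = - a -> dotv a w = 0.
  move=> a an; have : dotv a w = - dotv a w.
    by rewrite -{1}wS -(dotv_s _ _ sT) an dotvNl.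
  move/eqP; rewrite -subr_eq0 opprK -mulr2n mulrn_eq0 /= => /eqP //.
have dsw : forall a, dotv (a *m s) w = dotv a w.
  by move=> a; rewrite (dotv_s _ _ sT) wS.
have [t t1 Ht] := big_t Phi (fun a => dotv a w)
                     (fun a => `|dotv a y| + `|dotv (a *m s) y|).
pose x := y + t *: w.
have dx : forall a, dotv a x = dotv a y + t * dotv a w.
  by move=> a; rewrite /x dotvDr dotvZr.
have sg1 : forall a, a \in Phi -> a *m s != - a ->
    (0 < dotv a x) = (0 < dotv a w) /\ dotv a x != 0.
  move=> a aP an; rewrite dx; apply: sgn_lem.
  apply: le_lt_trans (Ht a aP (dw a aP an)).
  by rewrite lerDl normr_ge0.
have sg2 : forall a, a \in Phi -> a *m s != - a ->
    (0 < dotv (a *m s) x) = (0 < dotv a w).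
  move=> a aP an; rewrite dx dsw; apply: (proj1 (sgn_lem _)).
  apply: le_lt_trans (Ht a aP (dw a aP an)).
  by rewrite lerDr normr_ge0.
have rx : regular_set Phi x.
  move=> a aP; rewrite dotvC.
  have [an|an] := eqVneq (a *m s) (- a); last exact: (sg1 a aP an).2.
  rewrite dx dw0 // mulr0 addr0 dotvC; apply: ry.
  by rewrite mem_filter an eqxx.
have yx : connected_component (regular_set (bullet Phi s)) y x.
  apply: segment_comp => tau _ a ab.
  have an : a *m s = - a by move: ab; rewrite mem_filter => /andP[/eqP].
  by rewrite dotvC dotvDr dotvZr dotvZr dw0 // !mulr0 addr0 dotvC; apply: ry.
have Hst : forall a, a \in star Phi s -> 0 < dotv a x -> 0 < dotv (a *m s) x.
  move=> a; rewrite mem_filter => /andP[/andP[_ an] aP].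
  by rewrite (sg2 a aP an) (sg1 a aP an).1.
exists (connected_component (regular_set Phi) x).
  split; first by exists x.
  move=> a /(pos_roots_comp _ rx) [aP a0] ast.
  apply/(pos_roots_comp _ rx); split; first exact: sPhi.
  exact: Hst.
by rewrite part1 // (same_connected_component yx).
Qed.
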